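(* Let $(\mathbf F,\prec)$ be an IS-family over a finite set $V$. For every integer $x\ge0$, $M(x+1)\le 2M(x)$.
   Context: Let $V$ be a finite set, $n=|V|$, $\mathbf F$ a family of subsets of $V$ and $\prec$ a strict partial order on $\mathbf F$; $S\preceq S'$ means $S\prec S'$ or $S=S'$. For $S\in\mathbf F$ and $v\in V$, $S$ covers $v$ if there is $S'\in\mathbf F$ with $S'\prec S$ and $v\in S'\setminus S$. $Pred(S)$ is the set of $S'\in\mathbf F$ with $S'\prec S$ such that there is no $S''\in\mathbf F$ with $S'\prec S''\prec S$. The visible set $Vis(S)$ is the set of $v\in V$ such that $v\in S'$ for some $S'\in Pred(S)$ and $v$ is not covered by any element of $Pred(S)$. For $S\in\mathbf F$ and $v\in S$, a witness of $v$ w.r.t. $S$ is a $\prec$-minimal element $S'\in\mathbf F$ with $S\prec S'$ and $v\in S\setminus S'$. $(\mathbf F,\prec)$ is an IS-family if: (SE) there is a unique element $sm(\mathbf F)\in\mathbf F$ with $sm(\mathbf F)\prec S$ for every other $S\in\mathbf F$; (SM) $S_1\prec S_2$ implies $|S_1|<|S_2|$; (SW) for every $S\in\mathbf F$ and $v\in S$ there is at most one witness of $v$ w.r.t. $S$; (TE) if $S_1\prec S_2\prec S_3$ are in $\mathbf F$ and $v\in S_1\setminus S_2$ then $v\in S_1\setminus S_3$; (LVS) for every $S\in\mathbf F$ and $S'\in Pred(S)$, $|S'|\le |Vis(S)|$; (DVS) for every $S\in\mathbf F$ with $S\ne sm(\mathbf F)$, $Vis(S)$ is not a subset of $S$; (EC)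 $sm(\mathbf F)$ can be computed in $O(n^3)$ time, for given $S\in\mathbf F$ and $v\in S$ the witness of $v$ w.r.t. $S$ can be computed (or its nonexistence reported) in $O(n^3)$ time, and $S_1\prec S_2$ can be tested in $O(|S_1|)$ time. Notation: $hat(S)=S\setminus\bigcup_{S'\prec S}S'$; $ex(S)=|S|-|sm(\mathbf F)|$; for $x\ge0$, $\mathbf E_x=\{S\in\mathbf F: ex(S)\le x\}$; for $S\in\mathbf E_x$, $hat_x(S)$ is the set of $v\in hat(S)$ such that there is no $S'\in\mathbf E_x$ with $S\prec S'$ and $v\in S\setminus S'$; $M(x)=\sum_{S\in\mathbf E_x}2^{x-ex(S)}|hat_x(S)|$. *)

(* Defs.v *)
From mathcomp Require Import all_boot.
Set Implicit Arguments. Unset Strict Implicit. Unset Printing Implicit Defensive.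

Section ISFamily.
Variable V : finType.
Variable F : {set {set V}}.
Variable prec : rel {set V}.

Definition strict_porder_on : Prop :=
  (forall S, S \in F -> ~~ prec S S) /\
  (forall S1 S2 S3, S1 \in F -> S2 \in F -> S3 \in F ->
     prec S1 S2 -> prec S2 S3 -> prec S1 S3).

Definition covers (S : {set V}) (v : V) : bool :=
  [exists S' in F, prec S' S && (v \in S' :\: S)].

Definition Pred (S : {set V}) : {set {set V}} :=
  [set S' in F | prec S' S &&
     ~~ [exists S'' in F, prec S' S'' && prec S'' S]].

Definition Vis (S : {set V}) : {set V} :=
  [set v | [exists S' in Pred S, v \in S'] &&
           ~~ [exists S' in Pred S, covers S' v]].

Definition witness (S : {set V}) (v : V) (S' : {set V}) : bool :=
  [&& S' \in F, prec S S', v \in S :\: S' &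
      ~~ [exists S'' in F, [&& prec S S'', v \in S :\: S'' & prec S'' S']]].

Definition is_smallest (s : {set V}) : bool :=
  (s \in F) && [forall S in F, (S != s) ==> prec s S].

(* sm(F): the unique smallest element (default set0 if none) *)
Definition sm : {set V} := odflt set0 [pick s | is_smallest s].

Definition IS_family : Prop :=
  strict_porder_on /\
  (exists s, is_smallest s /\ forall s', is_smallest s' -> s' = s) /\
  (forall S1 S2, S1 \in F -> S2 \in F -> prec S1 S2 -> #|S1| < #|S2|) /\
  (forall S v, S \in F -> v \in S -> forall W1 W2,
     witness S v W1 -> witness S v W2 -> W1 = W2) /\
  (forall S1 S2 S3 v, S1 \in F -> S2 \in F -> S3 \in F ->
     prec S1 S2 -> prec S2 S3 -> v \in S1 :\: S2 -> v \in S1 :\: S3) /\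
  (forall S S', S \in F -> S' \in Pred S -> #|S'| <= #|Vis S|) /\
  (forall S, S \in F -> S != sm -> ~~ (Vis S \subset S)).

Definition hat (S : {set V}) : {set V} :=
  S :\: \bigcup_(S' in F | prec S' S) S'.

Definition ex (S : {set V}) : nat := #|S| - #|sm|.

Definition Ex (x : nat) : {set {set V}} := [set S in F | ex S <= x].

Definition hat_x (x : nat) (S : {set V}) : {set V} :=
  [set v in hat S | ~~ [exists S' in Ex x, prec S S' && (v \in S :\: S')]].

Definition M (x : nat) : nat :=
  \sum_(S in Ex x) 2 ^ (x - ex S) * #|hat_x x S|.

End ISFamily.

(* Main.v *)
Require Import Defs.
From mathcomp Require Import all_boot.
From mathcomp Require Import zify.

Lemma sum_sub (T : finType) (P Q : pred T) (f : T -> nat) :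
  (forall i, P i -> Q i) -> \sum_(i | P i) f i <= \sum_(i | Q i) f i.
Proof.
move=> PQ; rewrite [X in _ <= X](bigID P) /=.
have -> : \sum_(i | Q i && P i) f i = \sum_(i | P i) f i.
  by apply: eq_bigl => i; case Pi: (P i); rewrite ?andbT ?andbF ?PQ.
exact: leq_addr.
Qed.

Lemma sum_inj (I J : finType) (A : pred I) (B : pred J) (h : I -> J) (f : J -> nat) :
  {in A &, injective h} -> (forall i, A i -> B (h i)) ->
  \sum_(i | A i) f (h i) <= \sum_(j | B j) f j.
Proof.
move=> hinj hAB.
have -> : \sum_(i | A i) f (h i) = \sum_(j in [set h x | x in A]) f j.
  by rewrite (big_imset _ hinj).
apply: sum_sub => j /imsetP [i Ai ->]; exact: hAB.
Qed.

Theorem lemma3 (V : finType) (F : {set {set V}}) (prec : rel {set V}) :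
  IS_family F prec ->
  forall x : nat, M F prec x.+1 <= 2 * M F prec x.
Proof.
move=> [[Hirr Htr] [[s0 [Hs0 Hs0u]] [HSM [HSW [HTE [HLVS HDVS]]]]]] x.
have Hsm : is_smallest F prec (sm F prec).
  rewrite /sm; case: pickP => [s /= Hs|H]; first done.
  by move: (H s0); rewrite Hs0.
move/andP: Hsm => [smF /forallP smAll].
set a := #|sm F prec|.
have smle : forall S, S \in F -> a <= #|S|.
  move=> S SF; case: (eqVneq S (sm F prec)) => [->//|ne].
  apply: ltnW; apply: HSM => //.
  by move: (smAll S); rewrite SF ne.
have minex : forall (P : pred {set V}) S0, P S0 ->
    exists2 S, P S & forall S2, P S2 -> #|S| <= #|S2|.
  move=> P S0 PS0; case: (arg_minnP (fun S : {set V} => #|S|) PS0) => S PS Hm.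
  by exists S.
have maxex : forall (P : pred {set V}) S0, P S0 ->
    exists2 S, P S & forall S2, P S2 -> #|S2| <= #|S|.
  move=> P S0 PS0; case: (arg_maxnP (fun S : {set V} => #|S|) PS0) => S PS Hm.
  by exists S.
have predabove : forall S W, S \in F -> W \in F -> prec S W ->
    exists2 T, T \in Pred F prec W & (T == S) || prec S T.
  move=> S W SF WF SW.
  have [T /and3P[TF TW TS] Hm] := maxex
    (fun T => [&& T \in F, prec T W & (T == S) || prec S T]) S
    ltac:(rewrite /= SF SW eqxx //).
  exists T => //.
  rewrite inE TF TW /=; apply/existsP => -[T2 /andP[T2F /andP[TT2 T2W]]].
  have H2 : (T2 == S) || prec S T2.
    case/orP: TS => [/eqP<-|ST]; first by rewrite TT2 orbT.
    by apply/orP; right; exact: (Htr S T T2 SF TF T2F ST TT2).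
  have := Hm T2; rewrite T2F T2W H2 => /(_ isT).
  have := HSM T T2 TF T2F TT2.
  by move=> lt le; move: (leq_trans lt le); rewrite ltnn.
have witbelow : forall S v S', S \in F -> S' \in F -> prec S S' -> v \in S :\: S' ->
    exists2 W, witness F prec S v W & (W == S') || prec W S'.
  move=> S v S' SF S'F SS' vSS'.
  have [T /and4P[TF ST vST TS'] Hm] := minex
    (fun T => [&& T \in F, prec S T, v \in S :\: T & (T == S') || prec T S']) S'
    ltac:(rewrite /= S'F SS' vSS' eqxx //).
  exists T => //.
  rewrite /witness TF ST vST /=; apply/existsP => -[T2 /andP[T2F /and3P[ST2 vST2 T2T]]].
  have H2 : (T2 == S') || prec T2 S'.
    case/orP: TS' => [/eqP<-|TS']; first by rewrite T2T orbT.
    by apply/orP; right; exact: (Htr T2 T S' T2F TF S'F T2T TS').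
  have := Hm T2; rewrite T2F ST2 vST2 H2 => /(_ isT).
  have := HSM T2 T T2F TF T2T.
  by move=> lt le; move: (leq_trans lt le); rewrite ltnn.
pose K W := Vis F prec W :\: W.
pose good W v S := [&& S \in F, prec S W, v \in S &
   [forall S2, [&& S2 \in F, prec S2 W & v \in S2] ==> (#|S| <= #|S2|)]].
pose T0 W v := odflt set0 [pick S | good W v S].
have T0P : forall W v, v \in K W -> good W v (T0 W v).
  move=> W v; rewrite /K !inE => /andP[_ /andP[/existsP[S' /andP[S'P vS']] _]].
  move: S'P; rewrite inE => /andP[S'F /andP[S'W _]].
  have [S /and3P[SF SW vS] Hm] := minex
    (fun S => [&& S \in F, prec S W & v \in S]) S' ltac:(rewrite /= S'F S'W vS' //).
  have gS : good W v S.
    rewrite /good SF SW vS /=; apply/forallP => S2; apply/implyP; exact: Hm.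
  rewrite /T0; case: pickP => [S3 //|H]; by move: (H S); rewrite gS.
have F1 : forall W v, W \in F -> v \in K W -> witness F prec (T0 W v) v W.
  move=> W v WF vK; have := T0P W v vK.
  case/and4P => SF SW vS /forallP Hm; set S := T0 W v in SF SW vS Hm *.
  have vW : v \notin W by move: vK; rewrite !inE => /andP[].
  have vVis : v \in Vis F prec W by move: vK; rewrite !inE => /andP[].
  rewrite /witness WF SW inE vW vS /=.
  apply/existsP => -[S2 /andP[S2F /and3P[SS2 vSS2 S2W]]].
  have vS2 : v \notin S2 by move: vSS2; rewrite inE => /andP[].
  have [T TP TS2] := predabove S2 W S2F WF S2W.
  move: (TP); rewrite inE => /andP[TF /andP[TW TPr]].
  have ST : prec S T.
    case/orP: TS2 => [/eqP->//|S2T]; exact: (Htr S S2 T SF S2F TF SS2 S2T).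
  move: vVis; rewrite inE => /andP[_ /existsP Hnc]; apply: Hnc.
  exists T; rewrite TP /=.
  case vT: (v \in T).
  - case/orP: TS2 => [/eqP TS2|S2T]; first by move: vS2; rewrite -TS2 vT.
    exfalso; have := HTE S S2 T v SF S2F TF SS2 S2T vSS2.
    by rewrite inE vT.
  - apply/existsP; exists S.
    by rewrite SF ST inE vT vS.
have F2 : forall W v, W \in F -> ex F prec W = x.+1 -> v \in K W ->
    T0 W v \in Ex F prec x.
  move=> W v WF exW vK; have := T0P W v vK.
  case/and4P => SF SW vS _.
  rewrite inE SF /=; have := HSM _ _ SF WF SW; move: exW; rewrite /ex -/a.
  move=> h1 h2; clear -h1 h2; lia.
have F3 : forall W v, W \in F -> ex F prec W = x.+1 -> v \in K W ->
    v \in hat_x F prec x (T0 W v) :\: hat_x F prec x.+1 (T0 W v).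
  move=> W v WF exW vK; have wit := F1 W v WF vK; have := T0P W v vK.
  case/and4P => SF SW vS /forallP Hm; set S := T0 W v in wit SF SW vS Hm *.
  have vW : v \notin W by move: vK; rewrite !inE => /andP[].
  rewrite inE; apply/andP; split.
  - rewrite inE negb_and negbK; apply/orP; right; apply/existsP; exists W.
    by rewrite inE WF /= exW leqnn SW inE vW vS.
  - rewrite inE; apply/andP; split.
    + rewrite inE vS andbT; apply/bigcupP => -[S' /andP[S'F S'S] vS'].
      have := Hm S'; rewrite S'F (Htr S' S W S'F SF WF S'S SW) vS' /= => h1.
      have := HSM _ _ S'F SF S'S => h2.
      by move: (leq_trans h2 h1); rewrite ltnn.
    + apply/existsP => -[S' /andP[S'E /andP[SS' vSS']]].
      move: S'E; rewrite inE => /andP[S'F exS'].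
      have [W0 wit0 W0S'] := witbelow S v S' SF S'F SS' vSS'.
      have eW := HSW S v SF vS W0 W wit0 wit; subst W0.
      have h : #|W| <= #|S'|.
        case/orP: W0S' => [/eqP->//|WS']; exact: ltnW (HSM _ _ WF S'F WS').
      move: exW exS'; rewrite /ex -/a => h1 h2; clear -h h1 h2; lia.
have Hbound : forall W, W \in F -> ex F prec W = x.+1 ->
    #|hat F prec W| <= \sum_(v in K W) 2 ^ (x.+1 - ex F prec (T0 W v)).
  move=> W WF exW.
  have Wne : W != sm F prec.
    apply/eqP => eW; move: exW; rewrite eW /ex -/a subnn //.
  have := HDVS W WF Wne; case/subsetPn => v1 v1Vis v1W.
  have v1K : v1 \in K W by rewrite /K in_setD v1W v1Vis.
  have := v1Vis; rewrite inE => /andP[/existsP[T1 /andP[T1P v1T1]] _].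
  have hL := HLVS W T1 WF T1P.
  move: T1P; rewrite inE => /andP[T1F /andP[T1W _]].
  have := T0P W v1 v1K; case/and4P => SF SW vS /forallP Hm.
  have h5 : #|T0 W v1| <= #|T1|.
    by have := Hm T1; rewrite T1F T1W v1T1.
  have h6 := smle _ SF.
  have h1 : #|hat F prec W| <= #|W :\: Vis F prec W|.
    apply: subset_leq_card; apply/subsetP => v; rewrite /hat in_setD => /andP[vnU vW].
    rewrite in_setD vW andbT; apply/negP => vV; move/negP: vnU; apply.
    move: vV; rewrite inE => /andP[/existsP[S' /andP[S'P vS']] _].
    move: S'P; rewrite inE => /andP[S'F /andP[S'W _]].
    by apply/bigcupP; exists S'; rewrite ?S'F.
  have h2 := cardsID (Vis F prec W) W.
  have h3 := cardsID W (Vis F prec W).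
  rewrite setIC in h3.
  rewrite (bigD1 v1) //=.
  have h7 : \sum_(v in K W | v != v1) 1 <= \sum_(v in K W | v != v1) 2 ^ (x.+1 - ex F prec (T0 W v)).
    by apply: leq_sum => v _; rewrite expn_gt0.
  have h8 : #|K W| = 1 + \sum_(v in K W | v != v1) 1.
    by rewrite -sum1_card (bigD1 v1).
  have h9 := ltn_expl (x.+1 - ex F prec (T0 W v1)) (isT : 1 < 2).
  move: exW h9; rewrite /ex -/a /K in h7 h8 * => h4 h9.
  clear -h1 h2 h3 h4 h5 h6 h7 h8 h9 hL. lia.
have Hsub : forall S, hat_x F prec x.+1 S \subset hat_x F prec x S.
  move=> S; apply/subsetP => v; rewrite /hat_x !in_set => /andP[vh Hn].
  rewrite vh /=; apply: contra Hn => /existsP[S' /andP[S'E rest]].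
  apply/existsP; exists S'; rewrite rest andbT.
  by move: S'E; rewrite !inE => /andP[-> h]; exact: leqW h.
rewrite /M (bigID (fun S => ex F prec S <= x)) /=.
have E1 : \sum_(S in Ex F prec x.+1 | ex F prec S <= x)
    2 ^ (x.+1 - ex F prec S) * #|hat_x F prec x.+1 S| =
  \sum_(S in Ex F prec x) 2 ^ (x.+1 - ex F prec S) * #|hat_x F prec x.+1 S|.
  apply: eq_bigl => S; rewrite !inE; case: (S \in F) => //=.
  case h: (ex F prec S <= x); last by rewrite andbF.
  by rewrite (leq_trans h (leqnSn x)).
rewrite E1.
have E2 : 2 * \sum_(S in Ex F prec x) 2 ^ (x - ex F prec S) * #|hat_x F prec x S| =
  \sum_(S in Ex F prec x) 2 ^ (x.+1 - ex F prec S) * #|hat_x F prec x.+1 S| +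
  \sum_(S in Ex F prec x) 2 ^ (x.+1 - ex F prec S) *
      #|hat_x F prec x S :\: hat_x F prec x.+1 S|.
  rewrite big_distrr -big_split /=; apply: eq_bigr => S; rewrite inE => /andP[_ hS].
  rewrite -mulnDr -(cardsID (hat_x F prec x.+1 S) (hat_x F prec x S)).
  by rewrite (setIidPr (Hsub S)) subSn // expnS mulnA.
rewrite E2 leq_add2l.
apply: (@leq_trans (\sum_(W in Ex F prec x.+1 | ~~ (ex F prec W <= x))
          \sum_(v in K W) 2 ^ (x.+1 - ex F prec (T0 W v)))).
  apply: leq_sum => W /andP[]; rewrite inE => /andP[WF h1] h2.
  have exW : ex F prec W = x.+1 by clear -h1 h2; lia.
  rewrite exW subnn expn0 mul1n; apply: leq_trans (Hbound W WF exW).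
  apply: subset_leq_card; apply/subsetP => v; rewrite /hat_x in_set => /andP[] //.
rewrite (exchange_big_dep predT) //=.
have E3 : \sum_(S in Ex F prec x) 2 ^ (x.+1 - ex F prec S) *
      #|hat_x F prec x S :\: hat_x F prec x.+1 S| =
   \sum_(S in Ex F prec x) \sum_(v in hat_x F prec x S :\: hat_x F prec x.+1 S)
      2 ^ (x.+1 - ex F prec S).
  by apply: eq_bigr => S _; rewrite sum_nat_const mulnC.
rewrite E3 [X in _ <= X](exchange_big_dep predT) //=.
apply: leq_sum => v _.
apply: (@sum_inj _ _ _ _ (fun W => T0 W v) (fun S => 2 ^ (x.+1 - ex F prec S))).
- move=> W1 W2; rewrite !unfold_in /= => /andP[/andP[W1E h1] k1] /andP[/andP[W2E h2] k2] eq.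
  have : W1 \in Ex F prec x.+1 := W1E; rewrite inE => /andP[W1F _].
  have : W2 \in Ex F prec x.+1 := W2E; rewrite inE => /andP[W2F _].
  have w1 := F1 W1 v W1F k1; have w2 := F1 W2 v W2F k2.
  rewrite eq in w1.
  have := T0P W2 v k2; case/and4P => SF _ vS _.
  exact: HSW _ v SF vS W1 W2 w1 w2.
- move=> W /andP[/andP[WE h2] k].
  move: WE; rewrite inE => /andP[WF h1].
  have exW : ex F prec W = x.+1 by clear -h1 h2; lia.
  by rewrite F2 // F3.
Qed.
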